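(* Let $\Phi$ be a channel matrix whose rows $P^1,\dots,P^4\in\Delta^n$ are in general position, let $Q^0$ be the equidistant point from $P^1,\dots,P^4$ with barycentric coordinate $\boldsymbol\lambda^0$, and suppose $\lambda^0_1<0$, $\lambda^0_2<0$, $\lambda^0_3\ge0$, $\lambda^0_4\ge0$. Let $Q^{1(1)}=\pi(Q^0|L(P^2,P^3,P^4))$ and $Q^{1(2)}=\pi(Q^0|L(P^1,P^3,P^4))$ with barycentric coordinates $\boldsymbol\lambda^{1(1)},\boldsymbol\lambda^{1(2)}$ about $P^1,\dots,P^4$, and suppose $\lambda^{1(2)}_1<0$. Suppose further $\lambda^{1(1)}_2\ge0$, $\lambda^{1(1)}_3<0$, $\lambda^{1(1)}_4\ge0$, and let $Q^{2\dagger}=\pi(Q^0|L(P^2,P^4))$. Then the output distribution achieving the channel capacity is $Q^\ast=Q^{2\dagger}$ and the channel capacity is $C=D(P^2\|Q^{2\dagger})$.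
   Context: $\Delta^n=\{Q:Q_j>0,\sum_jQ_j=1\}$, $\bar\Delta^m=\{\boldsymbol\lambda:\lambda_i\ge0,\sum_i\lambda_i=1\}$; $D(Q\|Q')=\sum_jQ_j\log(Q_j/Q'_j)$. Rows are in general position if $P^2-P^1,\dots,P^m-P^1$ are linearly independent. $L(S^1,\dots,S^r)=\{\sum_i\lambda_iS^i:\sum_i\lambda_i=1\}\cap\Delta^n$; for such an affine subspace $L$, $\pi(Q'|L)$ is the unique $Q\in L$ minimizing $D(Q\|Q')$. The barycentric coordinate of $Q\in L(P^1,\dots,P^m)$ is the unique $\boldsymbol\lambda$ with $\sum_i\lambda_i=1$, $Q=\sum_i\lambda_iP^i$. The equidistant point is the unique $Q^0\in L(P^1,\dots,P^m)$ with all $D(P^i\|Q^0)$ equal. Mutual information $I(\boldsymbol\lambda,\Phi)=\sum_{i,j}\lambda_iP^i_j\log(P^i_j/Q_j)$ with $Q=\boldsymbol\lambda\Phi$; capacity $C=\max_{\boldsymbol\lambda\in\bar\Delta^m}I(\boldsymbol\lambda,\Phi)$; the capacity-achieving output distribution is $Q^\ast=\boldsymbol\lambda^\ast\Phi$ for a maximizer $\boldsymbol\lambda^\ast$ (unique). *)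

(* Defs.v *)
From mathcomp Require Import all_boot all_order all_algebra.
From mathcomp Require Import all_classical all_reals all_analysis.
Set Implicit Arguments. Unset Strict Implicit. Unset Printing Implicit Defensive.
Import Order.TTheory GRing.Theory Num.Theory.
Local Open Scope ring_scope.

(* Row indices of the 4 x n channel matrix: P^1..P^4 are rows p1..p4. *)
Definition p1 : 'I_4 := @Ordinal 4 0 isT.
Definition p2 : 'I_4 := @Ordinal 4 1 isT.
Definition p3 : 'I_4 := @Ordinal 4 2 isT.
Definition p4 : 'I_4 := @Ordinal 4 3 isT.

Section Channel.
Variables (R : realType) (n : nat).

Definition in_simplex (Q : 'I_n -> R) : Prop :=
  (forall j, 0 < Q j) /\ \sum_j Q j = 1.

Definition in_csimplex (l : 'I_4 -> R) : Prop :=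
  (forall i, 0 <= l i) /\ \sum_i l i = 1.

Definition KL (Q Q' : 'I_n -> R) : R :=
  \sum_j Q j * ln (Q j / Q' j).

Variable Phi : 'M[R]_(4, n).

Definition chrow (i : 'I_4) : 'I_n -> R := fun j => Phi i j.

Definition outdist (l : 'I_4 -> R) : 'I_n -> R :=
  fun j => \sum_i l i * Phi i j.

Definition general_position : Prop :=
  forall c : 'I_3 -> R,
    (forall j, \sum_k c k * (Phi (lift p1 k) j - Phi p1 j) = 0) ->
    forall k, c k = 0.

Definition affcomb (S : {set 'I_4}) (l : 'I_4 -> R) (Q : 'I_n -> R) : Prop :=
  (forall i, i \notin S -> l i = 0) /\ \sum_i l i = 1 /\
  (forall j, Q j = outdist l j).

Definition inL (S : {set 'I_4}) (Q : 'I_n -> R) : Prop :=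
  (exists l, affcomb S l Q) /\ in_simplex Q.

Definition is_proj (S : {set 'I_4}) (Q' Q : 'I_n -> R) : Prop :=
  inL S Q /\ forall Q'', inL S Q'' -> KL Q Q' <= KL Q'' Q'.

Definition barycentric (l : 'I_4 -> R) (Q : 'I_n -> R) : Prop :=
  affcomb [set: 'I_4] l Q.

Definition equidistant (Q : 'I_n -> R) : Prop :=
  inL [set: 'I_4] Q /\ forall i i', KL (chrow i) Q = KL (chrow i') Q.

Definition mutinf (l : 'I_4 -> R) : R :=
  \sum_i \sum_j l i * Phi i j * ln (Phi i j / outdist l j).

End Channel.

(* Main.v *)
Require Import Defs.
From mathcomp Require Import all_boot all_order all_algebra.
From mathcomp Require Import all_classical all_reals all_analysis.
From mathcomp Require Import ring lra.
Import Order.TTheory GRing.Theory Num.Theory.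
Local Open Scope ring_scope.

Lemma ln_le_sub1 {R : realType} (x : R) : 0 < x -> ln x <= x - 1.
Proof.
move=> x0; have [e|ne] := eqVneq (ln x) 0.
  have := ln_eq0 x0; rewrite e eqxx => /esym/eqP xe.
  by rewrite xe subrr.
have := expR_gt1Dx ne; rewrite lnK ?posrE // => h; lra.
Qed.

Lemma ln_eq_sub1 {R : realType} (x : R) : 0 < x -> ln x = x - 1 -> x = 1.
Proof.
move=> x0 e; have [e0|ne] := eqVneq (ln x) 0.
  by have := ln_eq0 x0; rewrite e0 eqxx => /esym/eqP.
have := expR_gt1Dx ne; rewrite lnK ?posrE // => h; lra.
Qed.

Lemma KL_ln (R : realType) n (P Q : 'I_n -> R) :
  (forall j, 0 < P j) -> (forall j, 0 < Q j) ->
  KL P Q = \sum_j P j * (ln (P j) - ln (Q j)).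
Proof.
move=> HP HQ; apply: eq_bigr => j _; by rewrite ln_div ?posrE.
Qed.

Lemma gibbs {R : realType} {n} {Q S : 'I_n -> R} :
  in_simplex Q -> in_simplex S ->
  0 <= KL Q S /\ (KL Q S <= 0 -> forall j, Q j = S j).
Proof.
move=> [HQ sQ] [HS sS].
have E : KL Q S = \sum_j (Q j * (ln (Q j) - ln (S j)) - Q j + S j).
  by rewrite KL_ln // big_split /= sumrB sQ sS subrK.
have T : forall j, 0 <= Q j * (ln (Q j) - ln (S j)) - Q j + S j.
  move=> j; have := ln_le_sub1 _ (divr_gt0 (HS j) (HQ j)).
  rewrite ln_div ?posrE // => h.
  have := HQ j => q0.
  have : Q j * (ln (S j) - ln (Q j)) <= Q j * (S j / Q j - 1) by rewrite ler_pM2l.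
  have -> : Q j * (S j / Q j - 1) = S j - Q j by field; rewrite gt_eqF.
  move=> h2; lra.
split; first by rewrite E; apply: sumr_ge0 => j _; exact: T.
move=> K0.
have Z : \sum_j (Q j * (ln (Q j) - ln (S j)) - Q j + S j) = 0.
  by apply/le_anti; rewrite -E K0 E; apply: sumr_ge0 => j _; exact: T.
move=> j.
have zj0 := psumr_eq0P (P := predT) (fun (i : 'I_n) (_ : true) => T i) Z.
have zj := zj0 j isT.
have q0 := HQ j.
have ex : ln (S j / Q j) = S j / Q j - 1.
  rewrite ln_div ?posrE //.
  have : Q j * (ln (S j) - ln (Q j)) = Q j * (S j / Q j - 1).
    have -> : Q j * (S j / Q j - 1) = S j - Q j by field; rewrite gt_eqF.
    lra.
  by move/mulfI; apply; rewrite gt_eqF.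
have := ln_eq_sub1 _ (divr_gt0 (HS j) (HQ j)) ex.
by move=> h; rewrite -[S j](@divfK _ (Q j)) ?gt_eqF // h mul1r.
Qed.

Lemma ident {R : realType} {n} {Phi : 'M[R]_(4, n)} (m : 'I_4 -> R) {Q S : 'I_n -> R} :
  (forall i j, 0 < Phi i j) -> (forall j, 0 < Q j) -> (forall j, 0 < S j) ->
  (forall j, Q j = outdist Phi m j) ->
  \sum_i m i * KL (chrow Phi i) S = \sum_i m i * KL (chrow Phi i) Q + KL Q S.
Proof.
move=> Hp HQ HS HQm.
have HP : forall i j, 0 < chrow Phi i j by move=> i j; exact: Hp.
have -> : \sum_i m i * KL (chrow Phi i) S =
  \sum_i m i * KL (chrow Phi i) Q +
  \sum_i m i * \sum_j chrow Phi i j * (ln (Q j) - ln (S j)).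
  rewrite -big_split; apply: eq_bigr => i _ /=.
  rewrite !KL_ln // -mulrDr -big_split; congr (_ * _); apply: eq_bigr => j _ /=.
  ring.
congr (_ + _); rewrite KL_ln //.
under eq_bigr do rewrite mulr_sumr.
rewrite exchange_big; apply: eq_bigr => j _ /=.
rewrite HQm /outdist mulr_suml; apply: eq_bigr => i _; rewrite /chrow; ring.
Qed.

Lemma mutinf_eq (R : realType) n (Phi : 'M[R]_(4, n)) (l : 'I_4 -> R) :
  mutinf Phi l = \sum_i l i * KL (chrow Phi i) (outdist Phi l).
Proof.
apply: eq_bigr => i _; rewrite /KL mulr_sumr; apply: eq_bigr => j _.
by rewrite /chrow mulrA.
Qed.

Lemma sum4 (R : realType) (F : 'I_4 -> R) : \sum_i F i = F p1 + F p2 + F p3 + F p4.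
Proof.
rewrite !big_ord_recr big_ord0 /= add0r.
by congr (_ + _ + _ + _); congr F; apply/val_inj.
Qed.

Lemma I4cases (i : 'I_4) : i = p1 \/ i = p2 \/ i = p3 \/ i = p4.
Proof.
case: i => [[|[|[|[|i]]]] Hi].
- by left; apply/val_inj.
- by right; left; apply/val_inj.
- by right; right; left; apply/val_inj.
- by right; right; right; apply/val_inj.
- by [].
Qed.

Definition o0 : 'I_3 := @Ordinal 3 0 isT.
Definition o1 : 'I_3 := @Ordinal 3 1 isT.
Definition o2 : 'I_3 := @Ordinal 3 2 isT.

Lemma sum3 (R : realType) (F : 'I_3 -> R) : \sum_i F i = F o0 + F o1 + F o2.
Proof.
rewrite !big_ord_recr big_ord0 /= add0r.
by congr (_ + _ + _); congr F; apply/val_inj.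
Qed.

Lemma lift0 : lift p1 o0 = p2. Proof. by apply/val_inj. Qed.
Lemma lift1 : lift p1 o1 = p3. Proof. by apply/val_inj. Qed.
Lemma lift2 : lift p1 o2 = p4. Proof. by apply/val_inj. Qed.

Lemma coords_unique (R : realType) n (Phi : 'M[R]_(4, n)) (l l' : 'I_4 -> R) :
  general_position Phi -> \sum_i l i = 1 -> \sum_i l' i = 1 ->
  (forall j, outdist Phi l j = outdist Phi l' j) -> forall i, l i = l' i.
Proof.
move=> GP sl sl' E.
have C := GP (fun k => l (lift p1 k) - l' (lift p1 k)).
have Z : forall k, l (lift p1 k) - l' (lift p1 k) = 0.
  apply: C => j; rewrite sum3 lift0 lift1 lift2.
  have := E j; rewrite /outdist !sum4 => Ej.
  move: sl sl'; rewrite !sum4 => sl sl'.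
  nra.
have := Z o0; have := Z o1; have := Z o2; rewrite lift0 lift1 lift2 => z2 z1 z0.
move: sl sl'; rewrite !sum4 => sl sl'.
move=> i; case: (I4cases i) => [->|[->|[->|->]]]; lra.
Qed.

Lemma finmin (R : realType) n (F : 'I_n -> R) :
  (forall j, 0 < F j) -> exists eps, 0 < eps /\ forall j, eps <= F j.
Proof.
move=> HF.
suff [e [e0 eF]] : exists eps, 0 < eps /\ forall j, j \in enum 'I_n -> eps <= F j.
  by exists e; split => // j; apply: eF; rewrite mem_enum.
elim: (enum 'I_n) => [|a s [e [e0 eF]]].
  by exists 1; split => //.
exists (Order.min e (F a)); split; first by rewrite lt_min e0 HF.
move=> j; rewrite in_cons => /orP [/eqP ->|js].
  by rewrite ge_min lexx orbT.
by rewrite ge_min eF.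
Qed.

Lemma real_lim (R : realType) (A K eps : R) : 0 < eps -> 0 <= K ->
  (forall t, `|t| <= eps -> 0 <= t * A + t ^+ 2 * K) -> A = 0.
Proof.
move=> e0 K0 H.
have B : forall s, 0 < s -> s <= eps -> `|A| <= s * K.
  move=> s s0 se.
  have h1 := H s; have h2 := H (- s).
  rewrite normrN gtr0_norm // in h2; rewrite gtr0_norm // in h1.
  have := h1 se; have := h2 se => {h1 h2} h2 h1.
  rewrite sqrrN in h2.
  have a1 : 0 <= s * (A + s * K) by rewrite mulrDr mulrA -expr2.
  have a2 : 0 <= s * (- A + s * K) by rewrite mulrDr mulrA -expr2 mulrN -mulNr.
  rewrite pmulr_rge0 // in a1; rewrite pmulr_rge0 // in a2.
  case: (ler0P A) => hA; lra.
apply/eqP; rewrite -normr_eq0 eq_le normr_ge0 andbT.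
case: (lerP `|A| 0) => // Ap; exfalso.
case: (ltrP (eps * K) `|A|) => h.
  have := B eps e0 (lexx _); lra.
have Kp : 0 < K by rewrite -(pmulr_rgt0 _ e0); exact: lt_le_trans Ap h.
have := B (`|A| / (2 * K)); rewrite divr_gt0 ?mulr_gt0 // => /(_ isT).
have -> : `|A| / (2 * K) * K = `|A| / 2 by field; rewrite gt_eqF.
have hs : `|A| / (2 * K) <= eps.
  rewrite ler_pdivrMr ?mulr_gt0 //; nra.
move=> /(_ hs); lra.
Qed.

Lemma sum_delta {R : realType} (i : 'I_4) (F : 'I_4 -> R) :
  \sum_a (a == i)%:R * F a = F i.
Proof.
rewrite (bigD1 i) //= eqxx mul1r big1 ?addr0 // => a /negbTE ->; by rewrite mul0r.
Qed.

Lemma first_order (R : realType) n (Phi : 'M[R]_(4, n)) S (Q0 Q' : 'I_n -> R) i k :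
  (forall i j, 0 < Phi i j) -> (forall i, \sum_j Phi i j = 1) ->
  equidistant Phi Q0 -> is_proj Phi S Q0 Q' -> i \in S -> k \in S ->
  KL (chrow Phi i) Q' = KL (chrow Phi k) Q'.
Proof.
move=> Hp Hs [[_ [HQ0 sQ0]] Heq] [[[kk [kkS [skk kQ]]] [HQ' sQ']] Hmin] iS kS.
have HP : forall i j, 0 < chrow Phi i j by move=> ? ?; exact: Hp.
pose v j := Phi i j - Phi k j.
have sv : \sum_j v j = 0 by rewrite /v sumrB !Hs subrr.
have [eps [e0 eF]] := @finmin _ _ (fun j => Q' j / (2 * (1 + `|v j|)))
  (fun j => divr_gt0 (HQ' j) (mulr_gt0 (ltr0Sn _ 1) (ltr_pwDl ltr01 (normr_ge0 _)))).
pose A := \sum_j v j * (ln (Q' j) - ln (Q0 j)).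
pose K := \sum_j (v j) ^+ 2 / Q' j.
have K0 : 0 <= K by apply: sumr_ge0 => j _; rewrite divr_ge0 ?sqr_ge0 ?ltW.
have Aeq : A = KL (chrow Phi k) Q' - KL (chrow Phi i) Q'.
  have hi : KL (chrow Phi i) Q0 - KL (chrow Phi i) Q' =
     \sum_j Phi i j * (ln (Q' j) - ln (Q0 j)).
    rewrite !KL_ln // -sumrB; apply: eq_bigr => j _; rewrite /chrow; ring.
  have hk : KL (chrow Phi k) Q0 - KL (chrow Phi k) Q' =
     \sum_j Phi k j * (ln (Q' j) - ln (Q0 j)).
    rewrite !KL_ln // -sumrB; apply: eq_bigr => j _; rewrite /chrow; ring.
  have : A = \sum_j Phi i j * (ln (Q' j) - ln (Q0 j)) -
             \sum_j Phi k j * (ln (Q' j) - ln (Q0 j)).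
    rewrite -sumrB; apply: eq_bigr => j _; rewrite /v; ring.
  have := Heq i k; lra.
suff : A = 0 by rewrite Aeq => /eqP; rewrite subr_eq0 => /eqP.
apply: (@real_lim _ A K eps e0 K0) => t ht.
pose Qt j := Q' j + t * v j.
have Qtpos : forall j, 0 < Qt j.
  move=> j; have := eF j; rewrite ler_pdivlMr ?mulr_gt0 ?ltr0Sn ?(ltr_pwDl ltr01 (normr_ge0 _)) // => hj.
  have q0 := HQ' j.
  have h1 : - (`|t| * `|v j|) <= t * v j.
    have : `|t * v j| <= `|t| * `|v j| by rewrite normrM.
    by rewrite ler_norml => /andP [].
  have h2 : `|t| * `|v j| <= eps * `|v j| by rewrite ler_wpM2r.
  have := normr_ge0 (v j) => h3.
  rewrite /Qt; nra.
have inLt : inL Phi S Qt.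
  split.
    exists (fun a => kk a + t * ((a == i)%:R - (a == k)%:R)); split; [|split].
    - move=> a aS; rewrite kkS //.
      have -> : (a == i) = false by apply/negbTE; apply: contraNneq aS => ->.
      have -> : (a == k) = false by apply/negbTE; apply: contraNneq aS => ->.
      by rewrite subrr mulr0 addr0.
    - rewrite big_split /= skk -mulr_sumr sumrB.
      have si : \sum_a ((a == i)%:R : R) = 1.
        by have := sum_delta i (fun _ => 1 : R); under eq_bigr do rewrite mulr1.
      have sk : \sum_a ((a == k)%:R : R) = 1.
        by have := sum_delta k (fun _ => 1 : R); under eq_bigr do rewrite mulr1.
      by rewrite si sk subrr mulr0 addr0.
    - move=> j; rewrite /Qt /outdist kQ /outdist.
      under [X in _ = X]eq_bigr do rewrite mulrDl.
      rewrite big_split /=; congr (_ + _).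
      have := sum_delta i (fun a => t * Phi a j); have := sum_delta k (fun a => t * Phi a j).
      move=> h2 h1.
      rewrite /v mulrBr -h1 -h2 -sumrB; apply: eq_bigr => a _; ring.
  split => //.
  rewrite /Qt big_split /= sQ' -mulr_sumr sv mulr0 addr0 //.
have Hm := Hmin _ inLt.
have E1 : KL Qt Q0 = \sum_j Qt j * (ln (Qt j) - ln (Q' j)) +
                     KL Q' Q0 + t * A.
  rewrite !KL_ln // /A mulr_sumr -!big_split /=; apply: eq_bigr => j _.
  rewrite /Qt; ring.
have E2 : \sum_j Qt j * (ln (Qt j) - ln (Q' j)) <= t ^+ 2 * K.
  have -> : t ^+ 2 * K = \sum_j Qt j * (Qt j / Q' j - 1).
    rewrite /K mulr_sumr.
    have -> : \sum_j Qt j * (Qt j / Q' j - 1) =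
      \sum_j (t * v j + t ^+ 2 * (v j ^+ 2 / Q' j)).
      apply: eq_bigr => j _; rewrite /Qt; by field; rewrite gt_eqF.
    by rewrite big_split /= -[X in _ = X + _]mulr_sumr sv mulr0 add0r.
  apply: ler_sum => j _; rewrite ler_pM2l // -ln_div ?posrE //.
  exact: ln_le_sub1 (divr_gt0 _ _).
lra.
Qed.

Lemma KL_self (R : realType) n (P : 'I_n -> R) : (forall j, 0 < P j) -> KL P P = 0.
Proof. by move=> HP; rewrite KL_ln // big1 // => j _; rewrite subrr mulr0. Qed.

Lemma rows_distinct (R : realType) n (Phi : 'M[R]_(4, n)) :
  general_position Phi -> ~ (forall j, Phi p4 j = Phi p2 j).
Proof.
move=> GP E.
have := GP (fun k => if k == o0 then -1 else if k == o2 then 1 else 0).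
move=> /(_ _ o0) /=.
move=> H; have : (-1 : R) = 0.
  apply: H => j; rewrite sum3 lift0 lift1 lift2 /= E; lra.
move=> h; lra.
Qed.

Lemma outpos (R : realType) n (Phi : 'M[R]_(4, n)) (l : 'I_4 -> R) j :
  (forall i j, 0 < Phi i j) -> in_csimplex l -> 0 < outdist Phi l j.
Proof.
move=> Hp [l0 sl].
have T : forall i, 0 <= l i * Phi i j by move=> i; apply: mulr_ge0; [exact: l0 | exact: ltW (Hp i j)].
have s0 : 0 <= outdist Phi l j by apply: sumr_ge0 => i _; exact: T.
case: (ltrP 0 (outdist Phi l j)) => // h; exfalso.
have Z : outdist Phi l j = 0 by apply/le_anti; rewrite h s0.
have Hz := psumr_eq0P (P := predT) (fun (i : 'I_4) (_ : true) => T i) Z.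
have : \sum_i l i = 0.
  apply: big1 => i _; have := Hz i isT; move/eqP.
  by rewrite mulf_eq0 (gt_eqF (Hp i j)) orbF => /eqP.
lra.
Qed.

Lemma outsum (R : realType) n (Phi : 'M[R]_(4, n)) (l : 'I_4 -> R) :
  (forall i, \sum_j Phi i j = 1) -> \sum_i l i = 1 -> \sum_j outdist Phi l j = 1.
Proof.
move=> Hs sl; rewrite /outdist exchange_big /=.
by under eq_bigr do rewrite -mulr_sumr Hs mulr1.
Qed.

Theorem theorem22 (R : realType) (n : nat) (Phi : 'M[R]_(4, n))
  (Q0 Q11 Q12 Q2 : 'I_n -> R) (l0 l11 l12 : 'I_4 -> R) :
  (forall i, in_simplex (chrow Phi i)) ->
  general_position Phi ->
  equidistant Phi Q0 -> barycentric Phi l0 Q0 ->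
  l0 p1 < 0 -> l0 p2 < 0 -> 0 <= l0 p3 -> 0 <= l0 p4 ->
  is_proj Phi [set p2; p3; p4] Q0 Q11 -> barycentric Phi l11 Q11 ->
  is_proj Phi [set p1; p3; p4] Q0 Q12 -> barycentric Phi l12 Q12 ->
  l12 p1 < 0 ->
  0 <= l11 p2 -> l11 p3 < 0 -> 0 <= l11 p4 ->
  is_proj Phi [set p2; p4] Q0 Q2 ->
  (* C = max_{lambda} I(lambda,Phi) = D(P^2 || Q2) *)
  (forall l, in_csimplex l -> mutinf Phi l <= KL (chrow Phi p2) Q2) /\
  (exists l, in_csimplex l /\ mutinf Phi l = KL (chrow Phi p2) Q2) /\
  (* every capacity-achieving input gives output Q* = Q2 *)
  (forall l, in_csimplex l -> mutinf Phi l = KL (chrow Phi p2) Q2 ->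
     forall j, outdist Phi l j = Q2 j).
Proof.
move=> Hrow GP EQ [_ [sl0 Ql0]] l01 l02 l03 l04 P11 [_ [sl11 Ql11]] _ _ _
  l112 l113 l114 P2.
have Hp : forall i j, 0 < Phi i j by move=> i j; exact: (Hrow i).1 j.
have Hs : forall i, \sum_j Phi i j = 1 by move=> i; exact: (Hrow i).2.
have HPr : forall i j, 0 < chrow Phi i j by move=> i j; exact: Hp.
have [[_ S0] Heq] := EQ.
have HQ0 := S0.1.
have [[[kk [kkS [skk kQ]]] S11] _] := P11.
have HQ11 := S11.1.
have [[[m [mS [sm Qm]]] S2] _] := P2.
have HQ2 := S2.1.
have m1 : m p1 = 0 by apply: mS; rewrite !inE.
have m3 : m p3 = 0 by apply: mS; rewrite !inE.
have l111 : l11 p1 = 0.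
  have kk1 : kk p1 = 0 by apply: kkS; rewrite !inE.
  rewrite -kk1; apply: (@coords_unique _ _ _ _ _ GP sl11 skk _ p1) => j.
  by rewrite -Ql11 -kQ.
set c := KL (chrow Phi p2) Q2.
have c4 : KL (chrow Phi p4) Q2 = c.
  by apply: (@first_order _ _ _ _ _ _ p4 p2 Hp Hs EQ P2); rewrite !inE.
set e := KL (chrow Phi p3) Q11.
have e2 : KL (chrow Phi p2) Q11 = e.
  by apply: (@first_order _ _ _ _ _ _ p2 p3 Hp Hs EQ P11); rewrite !inE.
have e4 : KL (chrow Phi p4) Q11 = e.
  by apply: (@first_order _ _ _ _ _ _ p4 p3 Hp Hs EQ P11); rewrite !inE.
set C0 := KL (chrow Phi p1) Q0.
have E0 : forall i, KL (chrow Phi i) Q0 = C0 by move=> i; exact: Heq.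
have G : forall Q S : 'I_n -> R, in_simplex Q -> in_simplex S -> 0 <= KL Q S.
  by move=> Q S h1 h2; exact: (gibbs h1 h2).1.
have g1 := G _ _ S2 S11. have g2 := G _ _ S11 S2.
have g3 := G _ _ S2 S0. have g4 := G _ _ S0 S2.
have g5 := G _ _ (Hrow p2) S2. rewrite -/c in g5.
have g6 := G _ _ S2 (Hrow p2). have g7 := G _ _ S2 (Hrow p4).
move: sm; rewrite sum4 m1 m3 => sm.
move: sl11; rewrite sum4 l111 => sl11.
move: sl0; rewrite sum4 => sl0.
have A1 := ident m Hp HQ2 HQ11 Qm.
rewrite !sum4 m1 m3 e2 e4 c4 in A1.
have m4e : m p4 = 1 - m p2 by lra.
have l4e : l11 p4 = 1 - l11 p2 - l11 p3 by lra.
have l04e : l0 p4 = 1 - l0 p1 - l0 p2 - l0 p3 by lra.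
rewrite -/c m4e in A1.
have Hec : e = c + KL Q2 Q11 by lra.
have A2 := ident l11 Hp HQ11 HQ2 Ql11.
rewrite !sum4 l111 e2 e4 c4 -/c -/e l4e in A2.
have h3 : l11 p3 * (KL (chrow Phi p3) Q2 - c) = KL Q2 Q11 + KL Q11 Q2 by lra.
have d3 : KL (chrow Phi p3) Q2 <= c by nra.
have B1 := ident m Hp HQ2 HQ0 Qm.
rewrite !sum4 m1 m3 !E0 c4 -/c m4e in B1.
have B2 := ident l0 Hp HQ0 HQ2 Ql0.
rewrite !sum4 !E0 c4 -/c l04e in B2.
have h1 : l0 p1 * (KL (chrow Phi p1) Q2 - c) + l0 p3 * (KL (chrow Phi p3) Q2 - c)
   = KL Q2 Q0 + KL Q0 Q2 by lra.
have d1 : KL (chrow Phi p1) Q2 <= c by nra.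
have K42 : 0 < KL (chrow Phi p4) (chrow Phi p2).
  have [g h] := gibbs (Hrow p4) (Hrow p2).
  case: (ltrP 0 (KL (chrow Phi p4) (chrow Phi p2))) => // hh; exfalso.
  exact: (@rows_distinct _ _ _ GP (h hh)).
have K24 : 0 < KL (chrow Phi p2) (chrow Phi p4).
  have [g h] := gibbs (Hrow p2) (Hrow p4).
  case: (ltrP 0 (KL (chrow Phi p2) (chrow Phi p4))) => // hh; exfalso.
  apply: (@rows_distinct _ _ _ GP) => j; by have := h hh j; rewrite /chrow.
have C1 := ident m Hp HQ2 (HPr p2) Qm.
rewrite !sum4 m1 m3 c4 KL_self // in C1.
have C2 := ident m Hp HQ2 (HPr p4) Qm.
rewrite !sum4 m1 m3 c4 KL_self // in C2.
have C1' : m p4 * KL (chrow Phi p4) (chrow Phi p2) = c + KL Q2 (chrow Phi p2).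
  by move: C1; rewrite -/c m4e; lra.
have C2' : m p2 * KL (chrow Phi p2) (chrow Phi p4) = c + KL Q2 (chrow Phi p4).
  by move: C2; rewrite -/c m4e; lra.
have m4p : 0 <= m p4 by nra.
have m2p : 0 <= m p2 by nra.
have dle : forall i, KL (chrow Phi i) Q2 <= c.
  move=> i; case: (I4cases i) => [->|[->|[->|->]]] //; by rewrite ?c4.
have bound : forall l, in_csimplex l ->
    mutinf Phi l <= c - KL (outdist Phi l) Q2 /\ in_simplex (outdist Phi l).
  move=> l [lp sl].
  have So : in_simplex (outdist Phi l).
    by split; [move=> j; exact: outpos | exact: outsum].
  split => //.
  have I := ident l Hp So.1 HQ2 (fun j => erefl).
  rewrite mutinf_eq.
  suff : \sum_i l i * KL (chrow Phi i) Q2 <= c by lra.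
  apply: (@le_trans _ _ (\sum_i l i * c)).
    by apply: ler_sum => i _; rewrite ler_wpM2l.
  by rewrite -mulr_suml sl mul1r.
split.
  move=> l hl; have [b So] := bound l hl.
  have := (gibbs So S2).1; lra.
split.
  exists m; split.
    split => //; last by rewrite sum4 m1 m3.
    by move=> i; case: (I4cases i) => [->|[->|[->|->]]]; rewrite ?m1 ?m3.
  rewrite mutinf_eq.
  have -> : outdist Phi m = Q2 by apply/funext => j; rewrite Qm.
  rewrite sum4 m1 m3 c4 -/c m4e; lra.
move=> l hl Eq; have [b So] := bound l hl.
apply: (gibbs So S2).2; lra.
Qed.
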